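(* Let $m\ge3$ and $k\ge1$. The PIN model on any $k$-regular, $k$-edge-connected loopless graph on vertex set $\mathcal M$ is strict Type $\mathcal S$.
   Context: Let $\mathcal M=\{1,\dots,m\}$. The PIN model on a graph $\mathcal G=(\mathcal M,\mathcal E)$, with $\mathcal E$ a finite multiset of 2-element subsets of $\mathcal M$, is defined as follows. Let $\mathcal E^{(n)}$ contain $n$ copies of each edge. Independent Bernoulli(1/2) variables $\xi_e$ are attached to the $e\in\mathcal E^{(n)}$, and $X^n_i=(\xi_e:e\in\mathcal E^{(n)},\ i\in e)$; the single-letter source $X_{\mathcal M}$ is the case $n=1$. $\mathcal G$ is $k$-regular if every vertex lies in exactly $k$ edges. $\mathcal G$ is $k$-edge-connected if for every nonempty proper subset $U\subset\mathcal M$ at least $k$ edges have one endpoint in $U$ and the other in $\mathcal M\setminus U$; equivalently, deleting fewer than $k$ edges never disconnects the graph. $\Delta(\mathcal P)=\frac1{|\mathcal P|-1}[\sum_{A\in\mathcal P}H(X_A)-H(X_{\mathcal M})]$ for partitions with at least 2 cells, where $X_A=(X_i:i\in A)$. The source is strict Type $\mathcal S$ if the singleton partition is the unique minimizer of $\Delta$. *)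

(* Defs.v *)
From mathcomp Require Import all_boot.
From Stdlib Require Import Reals.
Set Implicit Arguments. Unset Strict Implicit. Unset Printing Implicit Defensive.

(* A graph on M = 'I_m is a finite multiset (list) of edges, each an
   unordered pair given as an ordered pair of vertices.  Edges are indexed
   by 'I_(size G). *)
Definition graph (m : nat) := seq ('I_m * 'I_m).

Definition edge (m : nat) (G : graph m) (j : 'I_(size G)) : 'I_m * 'I_m :=
  tnth (in_tuple G) j.

Definition loopless (m : nat) (G : graph m) : Prop :=
  forall j : 'I_(size G), (edge j).1 != (edge j).2.

Definition incident (m : nat) (G : graph m) (i : 'I_m) (j : 'I_(size G)) : bool :=
  ((edge j).1 == i) || ((edge j).2 == i).

Definition regular (m : nat) (G : graph m) (k : nat) : Prop :=
  forall i : 'I_m, #|[set j : 'I_(size G) | incident i j]| = k.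

Definition edge_connected (m : nat) (G : graph m) (k : nat) : Prop :=
  forall U : {set 'I_m}, U != set0 -> U != [set: 'I_m] ->
    k <= #|[set j : 'I_(size G) | ((edge j).1 \in U) != ((edge j).2 \in U)]|.

(* Single-letter PIN source (n = 1): the sample space is {ffun E -> bool}
   with the uniform distribution, i.e. independent Bernoulli(1/2) bits xi_e. *)
Definition sample (m : nat) (G : graph m) := {ffun 'I_(size G) -> bool}.

(* X_i = (xi_e : e in E, i in e); non-incident coordinates are absent (None). *)
Definition Xi (m : nat) (G : graph m) (i : 'I_m) (xi : sample G)
  : {ffun 'I_(size G) -> option bool} :=
  [ffun j => if incident i j then Some (xi j) else None].

Definition XA (m : nat) (G : graph m) (A : {set 'I_m}) (xi : sample G)
  : {ffun 'I_m -> option {ffun 'I_(size G) -> option bool}} :=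
  [ffun i => if i \in A then Some (Xi i xi) else None].

(* Shannon entropy (in bits) of f(w), w uniform on the finite type Omega:
   H = - sum_y p(y) log2 p(y), p(y) = #{w | f w = y} / #|Omega|
   (Stdlib's ln 0 = 0, so 0 log 0 = 0). *)
Definition entropy (Omega T : finType) (f : Omega -> T) : R :=
  Ropp (\big[Rplus/0%R]_(y : T)
          (let p := Rdiv (INR #|[set w | f w == y]|) (INR #|Omega|) in
           Rmult p (Rdiv (ln p) (ln 2)))).

Definition HA (m : nat) (G : graph m) (A : {set 'I_m}) : R :=
  entropy (XA A (G:=G)).

Definition Delta (m : nat) (G : graph m) (P : {set {set 'I_m}}) : R :=
  Rdiv (Rminus (\big[Rplus/0%R]_(A in P) HA G A) (HA G [set: 'I_m]))
       (Rminus (INR #|P|) 1).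

Definition singleton_partition (m : nat) : {set {set 'I_m}} :=
  [set [set i] | i : 'I_m].

Definition strict_type_S (m : nat) (G : graph m) : Prop :=
  forall P : {set {set 'I_m}}, partition P [set: 'I_m] -> 2 <= #|P| ->
    P != singleton_partition m ->
    Rlt (Delta G (singleton_partition m)) (Delta G P).

(* Main.v *)
Require Import Defs.
From mathcomp Require Import all_boot.
From Stdlib Require Import Reals.
From mathcomp Require Import zify.
From Stdlib Require Import Lra Lia.
Set Implicit Arguments. Unset Strict Implicit. Unset Printing Implicit Defensive.

Lemma big_Rmult_r (I : finType) (P : pred I) (F : I -> R) c :
  Rmult (\big[Rplus/0%R]_(i | P i) F i) c = \big[Rplus/0%R]_(i | P i) Rmult (F i) c.
Proof.
apply: (big_morph (fun x => Rmult x c)); first by move=> x y; ring.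
by ring.
Qed.

Lemma big_INR (I : finType) (P : pred I) (F : I -> nat) :
  INR (\sum_(i | P i) F i) = \big[Rplus/0%R]_(i | P i) INR (F i).
Proof. apply: (big_morph INR); [exact: plus_INR | done]. Qed.

Lemma entropy_uniform (Omega T : finType) (f : Omega -> T) (s : nat) :
  0 < s -> 0 < #|Omega| ->
  (forall w, #|[set w' | f w' == f w]| = s) ->
  entropy f = Rdiv (ln (Rdiv (INR #|Omega|) (INR s))) (ln 2).
Proof.
move=> s0 N0 hs.
set N := #|Omega|.
have Npos : (0 < INR N)%R by apply: lt_0_INR; apply/ltP.
have spos : (0 < INR s)%R by apply: lt_0_INR; apply/ltP.
have sumfib : \sum_(y : T) #|[set w | f w == y]| = N.
  rewrite /N -sum1_card (partition_big f predT) //=.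
  by apply: eq_bigr => y _; rewrite sum1dep_card.
set c := Rdiv (ln (Rdiv (INR s) (INR N))) (ln 2).
rewrite /entropy.
rewrite (eq_bigr (fun y => Rmult (Rmult (INR #|[set w | f w == y]|) (/ INR N)) c)); last first.
  move=> y _ /=.
  case: (set_0Vmem [set w | f w == y]) => [->|[w]].
    rewrite cards0 /= /Rdiv. rewrite !Rmult_0_l; reflexivity.
  rewrite inE => /eqP fwy; rewrite -fwy hs /c /N; unfold Rdiv; reflexivity.
rewrite -big_Rmult_r -big_Rmult_r -big_INR sumfib /c.
have -> : Rdiv (INR s) (INR N) = Rinv (Rdiv (INR N) (INR s)) by field; lra.
rewrite ln_Rinv; last by apply: Rdiv_lt_0_compat.
field; split; [apply: Rgt_not_eq; rewrite -ln_1; apply: ln_increasing; lra | lra].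
Qed.

Definition touch m (G : graph m) (A : {set 'I_m}) (j : 'I_(size G)) : bool :=
  ((edge j).1 \in A) || ((edge j).2 \in A).

Lemma XA_eq m (G : graph m) (A : {set 'I_m}) (xi xi0 : sample G) :
  (XA A xi == XA A xi0) = [forall j, touch A j ==> (xi j == xi0 j)].
Proof.
apply/eqP/forallP => [h j | h].
  move/ffunP: h => h.
  apply/implyP => /orP [] hA.
    have := h (edge j).1; rewrite !ffunE hA => -[].
    move/ffunP => /(_ j); rewrite !ffunE /incident eqxx /= => -[->]; exact: eqxx.
  have := h (edge j).2; rewrite !ffunE hA => -[].
  move/ffunP => /(_ j); rewrite !ffunE /incident eqxx orbT /= => -[->]; exact: eqxx.
apply/ffunP => i; rewrite !ffunE; case: ifP => // iA; congr Some.
apply/ffunP => j; rewrite !ffunE; case: ifP => // /orP hinc; congr Some.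
apply/eqP; move: (h j) => /implyP; apply; rewrite /touch.
by case: hinc => /eqP ->; rewrite iA ?orbT.
Qed.

Lemma fiber_card m (G : graph m) (A : {set 'I_m}) (xi0 : sample G) :
  #|[set xi : sample G | XA A xi == XA A xi0]| = expn 2 #|[set j : 'I_(size G) | ~~ touch A j]|.
Proof.
pose F := fun j : 'I_(size G) => if touch A j then pred1 (xi0 j) else predT.
have -> : #|[set xi : sample G | XA A xi == XA A xi0]| = #|(finfun.family F : simpl_pred (sample G))|.
  apply: eq_card => xi; rewrite inE XA_eq.
  apply/forallP/familyP => h j; move: (h j); rewrite /F; case: (touch A j) => //=.
rewrite card_family foldrE big_map big_enum /=.
rewrite (eq_bigr (fun j => if ~~ touch A j then 2 else 1)); last first.
  move=> j _; rewrite /F; case: (touch A j) => /=.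
    by rewrite card1.
  by rewrite cardT enumT unlock.
rewrite -big_mkcond /= -prod_nat_const; apply: eq_bigl => j; by rewrite inE.
Qed.

Lemma INR_expn2 a : INR (expn 2 a) = pow 2 a.
Proof.
elim: a => [|a IH] //=; by rewrite expnS mult_INR IH.
Qed.

Lemma ln2_neq0 : ln 2 <> 0%R.
Proof. apply: Rgt_not_eq; rewrite -ln_1; apply: ln_increasing; lra. Qed.

Lemma HA_val m (G : graph m) (A : {set 'I_m}) :
  HA G A = INR #|[set j : 'I_(size G) | touch A j]|.
Proof.
set a := #|[set j : 'I_(size G) | touch A j]|.
set b := #|[set j : 'I_(size G) | ~~ touch A j]|.
have hab : #|{ffun 'I_(size G) -> bool}| = muln (expn 2 a) (expn 2 b).
  rewrite card_ffun card_bool -expnD /a /b.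
  have -> : [set j : 'I_(size G) | ~~ touch A j] = ~: [set j | touch A j].
    by apply/setP => j; rewrite !inE.
  by rewrite cardsC.
rewrite /HA (@entropy_uniform _ _ _ (expn 2 b)).
- rewrite [#|_|]hab mult_INR.
  have -> : Rdiv (Rmult (INR (expn 2 a)) (INR (expn 2 b))) (INR (expn 2 b)) = INR (expn 2 a).
    field; rewrite INR_expn2; apply: pow_nonzero; lra.
  rewrite INR_expn2 ln_pow; last lra.
  field; exact: ln2_neq0.
- by rewrite expn_gt0.
- by rewrite [#|_|]hab muln_gt0 !expn_gt0.
- move=> w; exact: fiber_card.
Qed.

Definition cross m (G : graph m) (A : {set 'I_m}) (j : 'I_(size G)) : bool :=
  ((edge j).1 \in A) != ((edge j).2 \in A).

Lemma card_sum (I : finType) (b : pred I) : #|[set j | b j]| = \sum_j (b j : nat).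
Proof. rewrite -sum1dep_card big_mkcond; apply: eq_bigr => j _; by case: (b j). Qed.

Lemma helper (T : finType) (P : {set T}) X Y (f : bool -> bool -> nat) :
  f false false = 0 -> X \in P -> Y \in P ->
  \sum_(A in P) f (A == X) (A == Y) =
  if X == Y then f true true else f true false + f false true.
Proof.
move=> f0 XP YP; rewrite (bigD1 X) //=; have -> : (X == X) = true := eqxx X.
case: eqP => [<-|/eqP nXY].
  rewrite big1 ?addn0 // => A /andP[_ /negbTE ->]; exact: f0.
rewrite (bigD1 Y) /=; last by rewrite YP eq_sym.
rewrite [Y == X]eq_sym (negbTE nXY); have -> : (Y == Y) = true := eqxx Y.
rewrite big1 ?addn0 // => A /andP[/andP[_ /negbTE ->] /negbTE ->].
exact: f0.
Qed.

Lemma key m (G : graph m) (P : {set {set 'I_m}}) :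
  (forall x, exists2 B, B \in P & forall A, A \in P -> (x \in A) = (A == B)) ->
  \sum_(A in P) #|[set j : 'I_(size G) | touch A j]| + \sum_(A in P) #|[set j : 'I_(size G) | touch A j]|
  = size G + size G + \sum_(A in P) #|[set j : 'I_(size G) | cross A j]|.
Proof.
move=> hB.
under eq_bigr => A _ do rewrite (card_sum (touch A)).
under [X in _ = _ + X]eq_bigr => A _ do rewrite (card_sum (cross A)).
rewrite (exchange_big _ _ _ (fun A => A \in P)) (exchange_big _ _ _ (fun A => A \in P)) /=.
rewrite -big_split /=.
rewrite (eq_bigr (fun j => 2 + \sum_(i in P) cross i j)); last first.
  move=> j _.
  have [X XP hX] := hB (edge j).1.
  have [Y YP hY] := hB (edge j).2.
  rewrite /touch /cross.
  rewrite (eq_bigr (fun A => ((fun a b => a || b) (A == X) (A == Y) : nat))); last first.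
    by move=> A AP; rewrite hX // hY.
  rewrite [X in _ = 2 + X](eq_bigr (fun A => ((fun a b => (a != b) : nat) (A == X) (A == Y)))); last first.
    by move=> A AP; rewrite hX // hY.
  rewrite (@helper _ P X Y (fun a b => a || b : nat)) // (@helper _ P X Y (fun a b => a != b : nat)) //.
  by case: (X == Y).
rewrite big_split /= sum_nat_const card_ord muln2 -addnn; congr (_ + _); apply: eq_bigr => j _; by apply: eq_bigl => i.
Qed.

Lemma Rdiv_lt a b c d : (0 < b)%R -> (0 < d)%R -> (a * d < c * b)%R -> (a / b < c / d)%R.
Proof.
move=> hb hd h.
have -> : (a / b = (a * d) * / (b * d))%R by field; lra.
have -> : (c / d = (c * b) * / (b * d))%R by field; lra.
apply: Rmult_lt_compat_r => //; apply: Rinv_0_lt_compat; nra.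
Qed.

Theorem corollary4 (m k : nat) (G : graph m) :
  3 <= m -> 1 <= k -> loopless G -> regular G k -> edge_connected G k ->
  strict_type_S G.
Proof.
move=> hm hk hloop hreg hcon P hP hp2 hneq.
have hBs : forall x, exists2 B, B \in singleton_partition m &
    forall A, A \in singleton_partition m -> (x \in A) = (A == B).
  move=> x; exists [set x]; first by apply: imset_f.
  by move=> A /imsetP [i _ ->]; rewrite in_set1 (inj_eq set1_inj) eq_sym.
have touch1 i : #|[set j : 'I_(size G) | touch [set i] j]| = k.
  by rewrite -(hreg i); apply: eq_card => j; rewrite !inE /incident /touch !inE.
have cross1 i : #|[set j : 'I_(size G) | cross [set i] j]| = k.
  rewrite -(hreg i); apply: eq_card => j; rewrite !inE /incident /cross !inE.
  have := hloop j.
  by case: ((edge j).1 =P i) => [->|_]; case: ((edge j).2 =P i) => [->|_] //; rewrite eqxx.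
set e := size G.
have sumS : \sum_(A in singleton_partition m) #|[set j : 'I_(size G) | touch A j]| = m * k.
  rewrite big_imset /=; last by move=> x y _ _; exact: set1_inj.
  under eq_bigr do rewrite touch1.
  by rewrite sum_nat_const card_ord mulnC.
have sumC : \sum_(A in singleton_partition m) #|[set j : 'I_(size G) | cross A j]| = m * k.
  rewrite big_imset /=; last by move=> x y _ _; exact: set1_inj.
  under eq_bigr do rewrite cross1.
  by rewrite sum_nat_const card_ord mulnC.
have e2 : m * k = e + e.
  have := key G hBs; rewrite sumS sumC; lia.
move: (hP) => /and3P [/eqP hcov tI h0].
have hBP : forall x, exists2 B, B \in P & forall A, A \in P -> (x \in A) = (A == B).
  move=> x; have xc : x \in cover P by rewrite hcov inE.
  exists (pblock P x); first exact: pblock_mem.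
  move=> A AP; apply/idP/eqP => [xA | ->]; first by rewrite (def_pblock tI AP xA).
  by rewrite mem_pblock.
have keyP := key G hBP.
have Pne A : A \in P -> A != set0 by move=> AP; apply: contraNneq h0 => <-.
have PnT A : A \in P -> A != [set: 'I_m].
  move=> AP; apply/eqP => AT.
  have : 0 < #|P :\ A| by move: hp2; rewrite (cardsD1 A) AP.
  rewrite card_gt0 => /set0Pn [B /setD1P [BA BP]].
  have /set0Pn [b bB] := Pne B BP.
  have nAB : A != B by rewrite eq_sym.
  have dAB := (trivIsetP tI) A B AP BP nAB.
  by have := disjointFl dAB bB; rewrite AT inE.
have crossP : #|P| * k <= \sum_(A in P) #|[set j : 'I_(size G) | cross A j]|.
  rewrite -sum_nat_const; apply: leq_sum => A AP.
  exact: (hcon A (Pne A AP) (PnT A AP)).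
have [A0 A0P A0big] : exists2 A0, A0 \in P & 1 < #|A0|.
  case: (boolP [exists A in P, 1 < #|A|]) => [/exists_inP [A0 H1 H2]|/exists_inP hno].
    by exists A0.
  have one A : A \in P -> #|A| = 1.
    move=> AP; have : 0 < #|A| by rewrite card_gt0; exact: Pne.
    have : ~~ (1 < #|A|) by apply/negP => h; apply: hno; exists A.
    lia.
  move/eqP: hneq => []; apply/setP => B; apply/idP/idP.
    move=> BP; have /eqP/cards1P [x ->] := one B BP; exact: imset_f.
  case/imsetP => i _ ->.
  have : i \in cover P by rewrite hcov inE.
  case/bigcupP => A AP iA.
  have /eqP/cards1P [y Ay] := one A AP.
  by move: iA; rewrite Ay in_set1 => /eqP ->; rewrite -Ay.
have pm : #|P| < m.
  have hs := card_partition hP; rewrite cardsT card_ord in hs.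
  suff : #|P| < \sum_(A in P) #|A| by rewrite -hs.
  rewrite -sum1_card (bigD1 A0) //= [X in _ < X](bigD1 A0) //=.
  rewrite -addSn; apply: leq_add => //.
  apply: leq_sum => A /andP [AP _]; rewrite card_gt0; exact: Pne.
rewrite /Defs.Delta.
under eq_bigr do rewrite HA_val.
rewrite [X in (_ < (X - _) / _)%R](eq_bigr (fun A => INR #|[set j : 'I_(size G) | touch A j]|)); last by move=> A _; exact: HA_val.
rewrite -!big_INR sumS HA_val.
have -> : [set j : 'I_(size G) | touch [set: 'I_m] j] = setT.
  by apply/setP => j; rewrite !inE /touch in_setT.
rewrite cardsT card_ord.
have -> : #|singleton_partition m| = m.
  by rewrite card_imset ?card_ord //; exact: set1_inj.
set SP := \sum_(A in P) #|[set j : 'I_(size G) | touch A j]| in keyP *.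
set C := \sum_(A in P) #|[set j : 'I_(size G) | cross A j]| in keyP crossP.
set p := #|P| in hp2 pm crossP *.
have R1 : INR (muln m k) = (INR (size G) + INR (size G))%R by rewrite e2 -plusE plus_INR.
have R2 : (INR SP + INR SP = INR (size G) + INR (size G) + INR C)%R by rewrite -!plus_INR !plusE keyP.
have R3 : (INR p * INR k <= INR C)%R by rewrite -mult_INR multE; apply: le_INR; apply/leP.
have R4 : (INR p + 1 <= INR m)%R by rewrite -S_INR; apply: le_INR; apply/leP.
have R5 : (2 <= INR p)%R by change 2%R with (INR 2); apply: le_INR; apply/leP.
have R6 : (1 <= INR k)%R by change 1%R with (INR 1); apply: le_INR; apply/leP.
rewrite R1.
rewrite -multE mult_INR in R1.
have h1 : (0 <= (INR C - INR p * INR k) * (INR m - 1))%R by apply: Rmult_le_pos; lra.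
have h2 : (0 < INR k * (INR m - INR p))%R by apply: Rmult_lt_0_compat; lra.
apply: Rdiv_lt; [lra | lra | nra].
Qed.
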